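(* Let $A$ be a finite set of formulas over the signature of the theory of extensional constant arrays, all of whose literals are flat. If some derivation of the calculus CAEXT starting from the initial configuration $\langle A, \mathcal{I}_0, \pi_0\rangle$ ends in the configuration $\mathsf{unsat}$, then $A$ is unsatisfiable in the theory of extensional constant arrays, i.e. no interpretation satisfying the axioms (row-eq), (row-ne), (ext), (roc) satisfies $A$.
   Context: Theory. Many-sorted first-order logic with equality. There is an index sort $\sigma$, an element sort $\tau$, and an array sort $(\sigma\to\tau)$, with function symbols: read $a[i]$ of type $(\sigma\to\tau)\times\sigma\to\tau$, write $a\langle i\triangleleft u\rangle$ of type $(\sigma\to\tau)\times\sigma\times\tau\to(\sigma\to\tau)$, and constant array $\langle v\rangle$ of type $\tau\to(\sigma\to\tau)$ (no restriction on whether $\sigma$ is finite or infinite). The theory of extensional constant arrays consists of all interpretations satisfying: (row-eq) $\forall a,i,j,u.\ i\approx j\Rightarrow a\langle i\triangleleft u\rangle[j]\approx u$; (row-ne) $\forall a,i,j,u.\ i\not\approx j\Rightarrow a\langle i\triangleleft u\rangle[j]\approx a[j]$; (ext) $\forall a,b.\ a\approx b\Leftrightarrow \forall i.\ a[i]\approx b[i]$; (roc) $\forall i,v.\ \langle v\rangle[i]\approx v$. The empty theory treats all these symbols (and the array sort) as uninterpreted. A literal is flat if it is $\bot$, $p(x_1,\dots,x_n)$, $\neg p(x_1,\dots,x_n)$, $x\approx y$, $x\not\approx y$, or $x\approx f(x_1,\dots,x_n)$ with $x,y,x_i$ uninterpreted constants; array disequalities are written $\neg(a\approx c)$. $T(A)$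 is the set of terms occurring in $A$, and $T_{\mathcal A}(A)$ the set of array terms in $A$. Let $W(A)=\{a\langle i\triangleleft u\rangle[i]\approx u \mid a\langle i\triangleleft u\rangle\in T(A)\}$. Configurations. A configuration is either $\mathsf{unsat}$ or a triple $\langle A,\mathcal I,\pi\rangle$ where $A$ is a set of formulas, $\mathcal I$ is either the special value $\mathcal I_0=\mathsf{none}$ or an interpretation in the empty theory satisfying $A$, and $\pi$ is a map sending pairs $(a,t)$, with $a$ an array term and $t$ either a read term $b[i]$ or a constant array term $\langle v\rangle$, to either the undefined value $()$ or a pair $(r,c)$ with $r$ a formula and $c$ an array term. $\pi_0$ maps every pair to $()$. The initial configuration for $A$ is $\langle A,\mathcal I_0,\pi_0\rangle$. Reasons. For a configuration, $\mathcal R(a,t)$ is defined recursively: $\mathcal R(a,t)=()$ if $\pi(a,t)=()$; otherwise $\mathcal R(a,t)=\top$ if $t=a$ or $t=a[i]$ for some $i$; otherwise $\mathcal R(a,t)=\mathcal R(c,t)\wedge r$ where $\pi(a,t)=(r,c)$. Updated indices: $I(a,\langle v\rangle)=()$ if $\pi(a,\langle v\rangle)=()$; $I(a,\langle v\rangle)=\emptyset$ if $a=\langle v\rangle$; $I(a,\langle v\rangle)=I(b,\langle v\rangle)\cup\{j\}$ if $\pi(a,\langle v\rangle)=(\top,b)$ with $b=a\langle j\triangleleft u\rangle$ or $a=b\langle j\triangleleft u\rangle$ for some $u$; otherwise $I(a,\langle v\rangle)=I(c,\langle v\rangle)$ where $\pi(a,\langle v\rangle)=(r,c)$. ''$\mathcal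 I\models\varphi$'' refers to the current interpretation $\mathcal I$ (evaluated in the empty theory); rules with such a premise apply only when $\mathcal I\neq\mathcal I_0$. ''Reset'' means setting $(\mathcal I,\pi):=(\mathcal I_0,\pi_0)$. Rules of CAEXT (each modifies the current configuration $\langle A,\mathcal I,\pi\rangle$): Interp: if $\mathcal I=\mathcal I_0$ and $\mathcal I'$ is an empty-theory interpretation with $\mathcal I'\models A\cup W(A)$, set $\mathcal I:=\mathcal I'$. Conf: if $A\cup W(A)$ is unsatisfiable in the empty theory, derive $\mathsf{unsat}$. InitR: if $a[i]\in T(A)$, set $\pi(a,a[i]):=(\top,a)$. InitW: if $s=a\langle i\triangleleft u\rangle\in T(A)$, set $\pi(s,s[i]):=(\top,s)$. RowD: if $\mathcal I\models i\not\approx j$, $\pi(a\langle j\triangleleft u\rangle,b[i])\ne()$ and $\pi(a,b[i])=()$, set $\pi(a,b[i]):=(i\not\approx j,\ a\langle j\triangleleft u\rangle)$. RowU: if $\mathcal I\models i\not\approx j$, $a\langle j\triangleleft u\rangle\in T(A)$, $\pi(a,b[i])\ne()$ and $\pi(a\langle j\triangleleft u\rangle,b[i])=()$, set $\pi(a\langle j\triangleleft u\rangle,b[i]):=(i\not\approx j,\ a)$. EqR: if $\mathcal I\models a\approx c$, $a,c\in T_{\mathcal A}(A)$, $a\approx c\in T(A)$, $\pi(a,b[i])\ne()$, $\pi(c,b[i])=()$, set $\pi(c,b[i]):=(a\approx c,a)$. EqL: same premises with roles swapped ($\pi(c,b[i])\ne()$, $\pi(a,b[i])=()$), set $\pi(a,b[i]):=(a\approx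 c,c)$. CongR: if $\mathcal I\models i\approx k$, $\pi(a,b[i])\ne()$, $\pi(a,c[k])\ne()$, $\mathcal I\models b[i]\not\approx c[k]$, add $\mathcal R(a,b[i])\wedge\mathcal R(a,c[k])\wedge i\approx k\Rightarrow b[i]\approx c[k]$ to $A$ and reset. DisEq: if $\mathcal I\models a\not\approx c$, $a,c\in T_{\mathcal A}(A)$, $a\approx c\in T(A)$, and the index constant $k_{\{a,c\}}\notin T(A)$, add $a\not\approx c\Rightarrow a[k_{\{a,c\}}]\not\approx c[k_{\{a,c\}}]$ to $A$ (with $k_{\{a,c\}}$ a fresh index constant associated with the pair) and reset. Roc: if $\pi(\langle v\rangle,b[i])\ne()$ and $\mathcal I\models b[i]\not\approx v$, add $\mathcal R(\langle v\rangle,b[i])\Rightarrow b[i]\approx v$ to $A$ and reset. InitC: if $\langle v\rangle\in T(A)$, set $\pi(\langle v\rangle,\langle v\rangle):=(\top,\langle v\rangle)$. CowD: if $\pi(a\langle j\triangleleft u\rangle,\langle v\rangle)\ne()$, $\pi(a,\langle v\rangle)=()$ and $\mathcal I\models\exists i{:}\sigma.\bigwedge_{k\in I(a\langle j\triangleleft u\rangle,\langle v\rangle)\cup\{j\}} i\not\approx k$, set $\pi(a,\langle v\rangle):=(\top,a\langle j\triangleleft u\rangle)$. CowU: if $\pi(a,\langle v\rangle)\ne()$, $\pi(a\langle j\triangleleft u\rangle,\langle v\rangle)=()$, $a\langle j\triangleleft u\rangle\in T(A)$ and $\mathcal I\models\exists i{:}\sigma.\bigwedge_{k\in I(a,\langle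 v\rangle)\cup\{j\}} i\not\approx k$, set $\pi(a\langle j\triangleleft u\rangle,\langle v\rangle):=(\top,a)$. CEqR: if $\mathcal I\models a\approx c$, $a,c\in T_{\mathcal A}(A)$, $a\approx c\in T(A)$, $\pi(a,\langle v\rangle)\ne()$, $\pi(c,\langle v\rangle)=()$, set $\pi(c,\langle v\rangle):=(a\approx c,a)$. CEqL: same with roles swapped, set $\pi(a,\langle v\rangle):=(a\approx c,c)$. CongC: if $\pi(a,\langle v\rangle)\ne()$, $\pi(a,\langle w\rangle)\ne()$, $\mathcal I\models v\not\approx w$ and $\mathcal I\models\exists i{:}\sigma.\bigwedge_{k\in I(a,\langle v\rangle)\cup I(a,\langle w\rangle)} i\not\approx k$, add $\mathcal R(a,\langle v\rangle)\wedge\mathcal R(a,\langle w\rangle)\wedge\exists i{:}\sigma.\bigwedge_{k\in I(a,\langle v\rangle)\cup I(a,\langle w\rangle)} i\not\approx k\Rightarrow v\approx w$ to $A$ and reset. Conflict rules are CongR, DisEq, Roc, CongC. Whenever a rule introduces non-flat literals, they are flattened with fresh constants. A derivation is a sequence of configurations, starting from an initial one, each obtained from the previous by a rule application. *)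

(* Defs.v *)
From Stdlib Require Import List Arith PeanoNat.
Import ListNotations.

Inductive sort : Type := SIdx | SElem | SArr.

Definition sort_eq_dec (s s' : sort) : {s = s'} + {s <> s'}.
Proof. decide equality. Defined.

(** Terms.  [Cst s n]: uninterpreted constant of sort [s];
    [Var s n]: (bound) variable of sort [s];
    [Read a i] = a[i];  [Write a i u] = a<i <| u>;  [CArr v] = <v>;
    [KDiff a c] = the index constant k_{a,c} associated with the pair (a,c)
    (an uninterpreted constant *symbol*; a, c are only part of its name). *)
Inductive term : Type :=
| Cst (s : sort) (n : nat)
| Var (s : sort) (n : nat)
| Read (a i : term)
| Write (a i u : term)
| CArr (v : term)
| KDiff (a c : term).

Definition term_eq_dec (t t' : term) : {t = t'} + {t <> t'}.
Proof. decide equality; try apply sort_eq_dec; apply Nat.eq_dec. Defined.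

Definition sort_of (t : term) : sort :=
  match t with
  | Cst s _ | Var s _ => s
  | Read _ _ => SElem
  | Write _ _ _ | CArr _ => SArr
  | KDiff _ _ => SIdx
  end.

Fixpoint wfT (t : term) : Prop :=
  match t with
  | Cst _ _ | Var _ _ => True
  | Read a i => wfT a /\ wfT i /\ sort_of a = SArr /\ sort_of i = SIdx
  | Write a i u => wfT a /\ wfT i /\ wfT u /\
      sort_of a = SArr /\ sort_of i = SIdx /\ sort_of u = SElem
  | CArr v => wfT v /\ sort_of v = SElem
  | KDiff a c => wfT a /\ wfT c /\ sort_of a = SArr /\ sort_of c = SArr
  end.

Inductive formula : Type :=
| FBot | FTop
| FEq (t1 t2 : term)
| FNot (f : formula)
| FAnd (f g : formula) | FOr (f g : formula) | FImp (f g : formula)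
| FEx (s : sort) (n : nat) (f : formula)
| FAll (s : sort) (n : nat) (f : formula).

Fixpoint wfF (f : formula) : Prop :=
  match f with
  | FBot | FTop => True
  | FEq t1 t2 => wfT t1 /\ wfT t2 /\ sort_of t1 = sort_of t2
  | FNot g => wfF g
  | FAnd g h | FOr g h | FImp g h => wfF g /\ wfF h
  | FEx _ _ g | FAll _ _ g => wfF g
  end.

(** Subterms (the arguments of a name k_{a,c} are not subterms). *)
Fixpoint subterms (t : term) : list term :=
  t :: match t with
       | Cst _ _ | Var _ _ | KDiff _ _ => []
       | Read a i => subterms a ++ subterms i
       | Write a i u => subterms a ++ subterms i ++ subterms u
       | CArr v => subterms v
       end.

Fixpoint fterms (f : formula) : list term :=
  match f with
  | FBot | FTop => []
  | FEq t1 t2 => subterms t1 ++ subterms t2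
  | FNot g => fterms g
  | FAnd g h | FOr g h | FImp g h => fterms g ++ fterms h
  | FEx _ _ g | FAll _ _ g => fterms g
  end.

Fixpoint atoms (f : formula) : list (term * term) :=
  match f with
  | FBot | FTop => []
  | FEq t1 t2 => [(t1, t2)]
  | FNot g => atoms g
  | FAnd g h | FOr g h | FImp g h => atoms g ++ atoms h
  | FEx _ _ g | FAll _ _ g => atoms g
  end.

Definition InT (t : term) (A : list formula) : Prop :=
  exists f, In f A /\ In t (fterms f).
Definition InArr (t : term) (A : list formula) : Prop :=
  InT t A /\ sort_of t = SArr.
Definition InAtom (a c : term) (A : list formula) : Prop :=
  exists f, In f A /\ In (a, c) (atoms f).

Definition isName (t : term) : Prop :=
  match t with Cst _ _ | Var _ _ | KDiff _ _ => True | _ => False end.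

Definition flatApp (t : term) : Prop :=
  match t with
  | Read a i => isName a /\ isName i
  | Write a i u => isName a /\ isName i /\ isName u
  | CArr v => isName v
  | _ => False
  end.

(** All literals of the formula are flat: positive literals x ≈ y or
    x ≈ f(x1,..,xn), negative literals ¬(x ≈ y), and ⊥ (⊤ is a logical
    constant and is allowed). *)
Fixpoint flatF (f : formula) : Prop :=
  match f with
  | FBot | FTop => True
  | FEq t1 t2 => isName t1 /\ (isName t2 \/ flatApp t2)
  | FNot g =>
      match g with
      | FEq t1 t2 => isName t1 /\ isName t2
      | _ => flatF g
      end
  | FAnd g h | FOr g h | FImp g h => flatF g /\ flatF h
  | FEx _ _ g | FAll _ _ g => flatF g
  end.

(** * Semantics (interpretations in the empty theory) *)

Record Interp : Type := {
  dom : sort -> Type;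
  dflt : forall s, dom s;                      (* domains are nonempty *)
  cst : forall s, nat -> dom s;
  kdf : term -> term -> dom SIdx;
  rd : dom SArr -> dom SIdx -> dom SElem;
  wr : dom SArr -> dom SIdx -> dom SElem -> dom SArr;
  ca : dom SElem -> dom SArr
}.

(* Coercion between sorts (identity on well-sorted terms). *)
Definition co (I : Interp) {s : sort} (s' : sort) (x : dom I s) : dom I s' :=
  match sort_eq_dec s s' with
  | left e => eq_rect s (dom I) x s' e
  | right _ => dflt I s'
  end.

Definition env (I : Interp) := forall s : sort, nat -> dom I s.

Fixpoint ev (I : Interp) (rho : env I) (t : term) {struct t} : dom I (sort_of t) :=
  match t as t0 return dom I (sort_of t0) with
  | Cst s n => cst I s n
  | Var s n => rho s n
  | Read a i => rd I (co I SArr (ev I rho a)) (co I SIdx (ev I rho i))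
  | Write a i u =>
      wr I (co I SArr (ev I rho a)) (co I SIdx (ev I rho i)) (co I SElem (ev I rho u))
  | CArr v => ca I (co I SElem (ev I rho v))
  | KDiff a c => kdf I a c
  end.

Definition upd_env (I : Interp) (rho : env I) (s : sort) (n : nat) (d : dom I s) : env I :=
  fun s' n' =>
    match sort_eq_dec s s' with
    | left e => if Nat.eqb n n' then eq_rect s (dom I) d s' e else rho s' n'
    | right _ => rho s' n'
    end.

Fixpoint holds (I : Interp) (rho : env I) (f : formula) : Prop :=
  match f with
  | FBot => False
  | FTop => True
  | FEq t1 t2 => ev I rho t1 = co I (sort_of t1) (ev I rho t2)
  | FNot g => ~ holds I rho g
  | FAnd g h => holds I rho g /\ holds I rho h
  | FOr g h => holds I rho g \/ holds I rho h
  | FImp g h => holds I rho g -> holds I rho h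
  | FEx s n g => exists d : dom I s, holds I (upd_env I rho s n d) g
  | FAll s n g => forall d : dom I s, holds I (upd_env I rho s n d) g
  end.

(** I ⊨ f (universal closure). *)
Definition modelsF (I : Interp) (f : formula) : Prop := forall rho, holds I rho f.
Definition modelsA (I : Interp) (A : list formula) : Prop :=
  forall f, In f A -> modelsF I f.

Definition modelsW (I : Interp) (A : list formula) : Prop :=
  forall a i u, InT (Write a i u) A ->
    modelsF I (FEq (Read (Write a i u) i) u).

Definition EmptySatW (A : list formula) : Prop :=
  exists I, modelsA I A /\ modelsW I A.

Definition ArrModel (I : Interp) : Prop :=
  (forall a i j u, i = j -> rd I (wr I a i u) j = u) /\
  (forall a i j u, i <> j -> rd I (wr I a i u) j = rd I a j) /\
  (forall a b, a = b <-> (forall i, rd I a i = rd I b i)) /\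
  (forall i v, rd I (ca I v) i = v).

Definition ArrSat (A : list formula) : Prop :=
  exists I, ArrModel I /\ modelsA I A.

Fixpoint maxv (t : term) : nat :=
  match t with
  | Var _ n => S n
  | Cst _ _ | KDiff _ _ => 0
  | Read a i => Nat.max (maxv a) (maxv i)
  | Write a i u => Nat.max (maxv a) (Nat.max (maxv i) (maxv u))
  | CArr v => maxv v
  end.

Definition freshv (S : list term) : nat :=
  fold_right (fun t m => Nat.max (maxv t) m) 0 S.

Definition bigand (l : list formula) : formula := fold_right FAnd FTop l.

(** ∃ i:σ. ⋀_{k ∈ S} i ≉ k  (with a bound variable not occurring in S). *)
Definition exdiff (S : list term) : formula :=
  let n := freshv S in
  FEx SIdx n (bigand (map (fun k => FNot (FEq (Var SIdx n) k)) S)).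

Fixpoint substT (x t s : term) : term :=
  if term_eq_dec s x then t else
  match s with
  | Read a i => Read (substT x t a) (substT x t i)
  | Write a i u => Write (substT x t a) (substT x t i) (substT x t u)
  | CArr v => CArr (substT x t v)
  | _ => s
  end.

Fixpoint substF (x t : term) (f : formula) : formula :=
  match f with
  | FBot => FBot | FTop => FTop
  | FEq t1 t2 => FEq (substT x t t1) (substT x t t2)
  | FNot g => FNot (substF x t g)
  | FAnd g h => FAnd (substF x t g) (substF x t h)
  | FOr g h => FOr (substF x t g) (substF x t h)
  | FImp g h => FImp (substF x t g) (substF x t h)
  | FEx s n g => FEx s n (substF x t g)
  | FAll s n g => FAll s n (substF x t g)
  end.

Definition expand (defs : list (term * term)) (f : formula) : formula :=
  fold_left (fun g d => substF (fst d) (snd d) g) defs f.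

Definition noVars (t : term) : Prop :=
  forall s n, ~ In (Var s n) (subterms t).

Definition Flatten (A : list formula) (f : formula) (F : list formula) : Prop :=
  exists (f' : formula) (defs : list (term * term)),
    F = f' :: map (fun d => FEq (fst d) (snd d)) defs /\
    (forall d, In d defs ->
       (exists s n, fst d = Cst s n /\ ~ InT (Cst s n) A /\ ~ In (Cst s n) (fterms f)) /\
       sort_of (fst d) = sort_of (snd d) /\ wfT (snd d) /\ noVars (snd d)) /\
    NoDup (map fst defs) /\
    expand defs f' = f /\
    (forall g, In g F -> flatF g).

Definition pimap := term -> term -> option (formula * term).

Definition pi0 : pimap := fun _ _ => None.

Definition upd (pi : pimap) (a t : term) (v : option (formula * term)) : pimap :=
  fun a' t' =>
    if term_eq_dec a a' then (if term_eq_dec t t' then v else pi a' t') else pi a' t'.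

Inductive config : Type :=
| Unsat
| Cfg (A : list formula) (I : option Interp) (pi : pimap).

(** Reasons R(a,t) (relationally; defined case only). *)
Inductive Reason (pi : pimap) : term -> term -> formula -> Prop :=
| R_base : forall a t,
    pi a t <> None -> (t = a \/ exists i, t = Read a i) -> Reason pi a t FTop
| R_step : forall a t r c R,
    pi a t = Some (r, c) -> ~ (t = a \/ exists i, t = Read a i) ->
    Reason pi c t R -> Reason pi a t (FAnd R r).

(** Updated indices I(a, <v>) (here [t] is the term <v>). *)
Inductive UpdIdx (pi : pimap) : term -> term -> list term -> Prop :=
| U_base : forall a t, pi a t <> None -> a = t -> UpdIdx pi a t []
| U_write : forall a t b j u S,
    pi a t = Some (FTop, b) -> a <> t ->
    (b = Write a j u \/ a = Write b j u) ->
    UpdIdx pi b t S -> UpdIdx pi a t (j :: S)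
| U_other : forall a t r c S,
    pi a t = Some (r, c) -> a <> t ->
    ~ (r = FTop /\ exists j u, c = Write a j u \/ a = Write c j u) ->
    UpdIdx pi c t S -> UpdIdx pi a t S.

(** "I ⊨ f" for the current interpretation (requires I ≠ I_0). *)
Definition Js (I : option Interp) (f : formula) : Prop :=
  exists J, I = Some J /\ modelsF J f.

Definition neqF (x y : term) : formula := FNot (FEq x y).

Inductive step : config -> config -> Prop :=
| sInterp : forall A pi J,
    modelsA J A -> modelsW J A ->
    step (Cfg A None pi) (Cfg A (Some J) pi)
| sConf : forall A I pi,
    ~ EmptySatW A -> step (Cfg A I pi) Unsat
| sInitR : forall A I pi a i,
    InT (Read a i) A ->
    step (Cfg A I pi) (Cfg A I (upd pi a (Read a i) (Some (FTop, a))))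
| sInitW : forall A I pi a i u,
    InT (Write a i u) A ->
    step (Cfg A I pi)
      (Cfg A I (upd pi (Write a i u) (Read (Write a i u) i) (Some (FTop, Write a i u))))
| sRowD : forall A I pi a j u b i,
    Js I (neqF i j) ->
    pi (Write a j u) (Read b i) <> None -> pi a (Read b i) = None ->
    step (Cfg A I pi) (Cfg A I (upd pi a (Read b i) (Some (neqF i j, Write a j u))))
| sRowU : forall A I pi a j u b i,
    Js I (neqF i j) -> InT (Write a j u) A ->
    pi a (Read b i) <> None -> pi (Write a j u) (Read b i) = None ->
    step (Cfg A I pi) (Cfg A I (upd pi (Write a j u) (Read b i) (Some (neqF i j, a))))
| sEqR : forall A I pi a c b i,
    Js I (FEq a c) -> InArr a A -> InArr c A -> InAtom a c A ->
    pi a (Read b i) <> None -> pi c (Read b i) = None ->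
    step (Cfg A I pi) (Cfg A I (upd pi c (Read b i) (Some (FEq a c, a))))
| sEqL : forall A I pi a c b i,
    Js I (FEq a c) -> InArr a A -> InArr c A -> InAtom a c A ->
    pi c (Read b i) <> None -> pi a (Read b i) = None ->
    step (Cfg A I pi) (Cfg A I (upd pi a (Read b i) (Some (FEq a c, c))))
| sCongR : forall A I pi a b i c k R1 R2 F,
    Js I (FEq i k) ->
    pi a (Read b i) <> None -> pi a (Read c k) <> None ->
    Js I (neqF (Read b i) (Read c k)) ->
    Reason pi a (Read b i) R1 -> Reason pi a (Read c k) R2 ->
    Flatten A (FImp (FAnd (FAnd R1 R2) (FEq i k)) (FEq (Read b i) (Read c k))) F ->
    step (Cfg A I pi) (Cfg (A ++ F) None pi0)
| sDisEq : forall A I pi a c F,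
    Js I (neqF a c) -> InArr a A -> InArr c A -> InAtom a c A ->
    ~ InT (KDiff a c) A -> ~ InT (KDiff c a) A ->
    Flatten A (FImp (neqF a c) (neqF (Read a (KDiff a c)) (Read c (KDiff a c)))) F ->
    step (Cfg A I pi) (Cfg (A ++ F) None pi0)
| sRoc : forall A I pi v b i R F,
    pi (CArr v) (Read b i) <> None ->
    Js I (neqF (Read b i) v) ->
    Reason pi (CArr v) (Read b i) R ->
    Flatten A (FImp R (FEq (Read b i) v)) F ->
    step (Cfg A I pi) (Cfg (A ++ F) None pi0)
| sInitC : forall A I pi v,
    InT (CArr v) A ->
    step (Cfg A I pi) (Cfg A I (upd pi (CArr v) (CArr v) (Some (FTop, CArr v))))
| sCowD : forall A I pi a j u v S,
    pi (Write a j u) (CArr v) <> None -> pi a (CArr v) = None ->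
    UpdIdx pi (Write a j u) (CArr v) S ->
    Js I (exdiff (j :: S)) ->
    step (Cfg A I pi) (Cfg A I (upd pi a (CArr v) (Some (FTop, Write a j u))))
| sCowU : forall A I pi a j u v S,
    pi a (CArr v) <> None -> pi (Write a j u) (CArr v) = None ->
    InT (Write a j u) A ->
    UpdIdx pi a (CArr v) S ->
    Js I (exdiff (j :: S)) ->
    step (Cfg A I pi) (Cfg A I (upd pi (Write a j u) (CArr v) (Some (FTop, a))))
| sCEqR : forall A I pi a c v,
    Js I (FEq a c) -> InArr a A -> InArr c A -> InAtom a c A ->
    pi a (CArr v) <> None -> pi c (CArr v) = None ->
    step (Cfg A I pi) (Cfg A I (upd pi c (CArr v) (Some (FEq a c, a))))
| sCEqL : forall A I pi a c v,
    Js I (FEq a c) -> InArr a A -> InArr c A -> InAtom a c A ->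
    pi c (CArr v) <> None -> pi a (CArr v) = None ->
    step (Cfg A I pi) (Cfg A I (upd pi a (CArr v) (Some (FEq a c, c))))
| sCongC : forall A I pi a v w S1 S2 R1 R2 F,
    pi a (CArr v) <> None -> pi a (CArr w) <> None ->
    Js I (neqF v w) ->
    UpdIdx pi a (CArr v) S1 -> UpdIdx pi a (CArr w) S2 ->
    Js I (exdiff (S1 ++ S2)) ->
    Reason pi a (CArr v) R1 -> Reason pi a (CArr w) R2 ->
    Flatten A (FImp (FAnd (FAnd R1 R2) (exdiff (S1 ++ S2))) (FEq v w)) F ->
    step (Cfg A I pi) (Cfg (A ++ F) None pi0).

Inductive derives : config -> config -> Prop :=
| d_refl : forall c, derives c c
| d_step : forall c1 c2 c3, step c1 c2 -> derives c2 c3 -> derives c1 c3.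

(* Main.v *)
Require Import Defs.
From Stdlib Require Import List Arith PeanoNat Lia Eqdep_dec Classical ClassicalEpsilon.
Import ListNotations.


Lemma sort_UIP : forall (s : sort) (e : s = s), e = eq_refl.
Proof. intros. apply UIP_dec. exact sort_eq_dec. Qed.

Lemma co_id : forall I s (x : dom I s), co I s x = x.
Proof. intros. unfold co. destruct (sort_eq_dec s s) as [e|n].
  rewrite (sort_UIP s e). reflexivity. congruence. Qed.

Lemma pv_inj : forall I s (x y : dom I s), existT (dom I) s x = existT (dom I) s y -> x = y.
Proof. intros. apply inj_pair2_eq_dec in H; auto. exact sort_eq_dec. Qed.

Lemma co_pv : forall I s s1 s2 (v1 : dom I s1) (v2 : dom I s2),
  existT (dom I) s1 v1 = existT (dom I) s2 v2 -> co I s v1 = co I s v2.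
Proof. intros. assert (s1 = s2) by (exact (f_equal (@projT1 _ _) H)). subst.
  apply pv_inj in H. subst. reflexivity. Qed.

Lemma feq_pv : forall I s1 s1' s2 s2' (v1 : dom I s1) (v1' : dom I s1') (v2 : dom I s2) (v2' : dom I s2'),
  existT (dom I) s1 v1 = existT (dom I) s1' v1' ->
  existT (dom I) s2 v2 = existT (dom I) s2' v2' ->
  (v1 = co I s1 v2 <-> v1' = co I s1' v2').
Proof. intros. assert (s1 = s1') by (exact (f_equal (@projT1 _ _) H)). subst.
  apply pv_inj in H. subst. rewrite (co_pv I s1' _ _ v2 v2' H0). tauto. Qed.

Lemma feq_iff : forall I s1 s2 s (v1 : dom I s1) (v2 : dom I s2),
  s1 = s -> s2 = s -> (v1 = co I s1 v2 <-> co I s v1 = co I s v2).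
Proof. intros. subst. rewrite !co_id. tauto. Qed.

Lemma pv_of_eq : forall I s1 s2 (v1 : dom I s1) (v2 : dom I s2),
  s1 = s2 -> v1 = co I s1 v2 -> existT (dom I) s1 v1 = existT (dom I) s2 v2.
Proof. intros. subst. rewrite co_id. reflexivity. Qed.

Lemma eq_of_pv : forall I s1 s2 (v1 : dom I s1) (v2 : dom I s2),
  existT (dom I) s1 v1 = existT (dom I) s2 v2 -> v1 = co I s1 v2.
Proof. intros. assert (s1 = s2) by (exact (f_equal (@projT1 _ _) H)). subst.
  apply pv_inj in H. subst. rewrite co_id. reflexivity. Qed.

Fixpoint NV (t : term) : Prop :=
  match t with
  | Var _ _ => False
  | Cst _ _ | KDiff _ _ => True
  | Read a i => NV a /\ NV i
  | Write a i u => NV a /\ NV i /\ NV u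
  | CArr v => NV v
  end.

Lemma noVars_NV : forall t, noVars t -> NV t.
Proof. unfold noVars. induction t; simpl; intros H; auto.
  - apply (H s n). left; auto.
  - split; [apply IHt1|apply IHt2]; intros s n Hin; apply (H s n); right; apply in_or_app; auto.
  - split; [apply IHt1|split;[apply IHt2|apply IHt3]]; intros s n Hin; apply (H s n); right;
    repeat (apply in_or_app; (left; assumption) || right); auto.
  - apply IHt; intros s n Hin; apply (H s n); right; auto.
Qed.

Lemma NV_noVars : forall t, NV t -> noVars t.
Proof. unfold noVars. induction t; simpl; intros H s0 n0 Hin.
  - destruct Hin as [e|[]]; discriminate.
  - exact H.
  - destruct Hin as [e|Hin]; [discriminate|]. apply in_app_or in Hin. destruct H; destruct Hin.
    eapply IHt1; eauto. eapply IHt2; eauto.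
  - destruct Hin as [e|Hin]; [discriminate|]. destruct H as (?&?&?).
    repeat (apply in_app_or in Hin; destruct Hin as [Hin|Hin]).
    eapply IHt1; eauto. eapply IHt2; eauto. eapply IHt3; eauto.
  - destruct Hin as [e|Hin]; [discriminate|]. eapply IHt; eauto.
  - destruct Hin as [e|[]]; discriminate.
Qed.

Lemma ev_NV : forall I t, NV t -> forall rho rho', ev I rho t = ev I rho' t.
Proof. induction t; simpl; intros H rho rho'; try tauto.
  - destruct H. rewrite (IHt1 H rho rho'), (IHt2 H0 rho rho'). reflexivity.
  - destruct H as (?&?&?). rewrite (IHt1 H rho rho'), (IHt2 H0 rho rho'), (IHt3 H1 rho rho'). reflexivity.
  - rewrite (IHt H rho rho'). reflexivity.
Qed.

Lemma ev_upd_fresh : forall I rho s n d t, maxv t <= n -> ev I (upd_env I rho s n d) t = ev I rho t.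
Proof. induction t; simpl; intros H; try reflexivity.
  - unfold upd_env. destruct (sort_eq_dec s s0); auto.
    destruct (Nat.eqb_spec n n0); auto. lia.
  - rewrite IHt1, IHt2 by lia. reflexivity.
  - rewrite IHt1, IHt2, IHt3 by lia. reflexivity.
  - rewrite IHt by lia. reflexivity.
Qed.

Lemma upd_env_same : forall I rho s n d, upd_env I rho s n d s n = d.
Proof. intros. unfold upd_env. destruct (sort_eq_dec s s) as [e|]; [|congruence].
  rewrite Nat.eqb_refl. rewrite (sort_UIP s e). reflexivity. Qed.

Definition chg (I : Interp) (c : forall s, nat -> dom I s) (k : term -> term -> dom I SIdx) : Interp :=
  {| dom := dom I; dflt := dflt I; cst := c; kdf := k; rd := rd I; wr := wr I; ca := ca I |}.

Ltac inapp := first [assumption | apply in_or_app; left; inapp | apply in_or_app; right; inapp].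

Lemma ev_chg : forall I c k t (rho : env I),
  (forall s n, In (Cst s n) (subterms t) -> c s n = cst I s n) ->
  (forall x y, In (KDiff x y) (subterms t) -> k x y = kdf I x y) ->
  ev (chg I c k) rho t = ev I rho t.
Proof. induction t; simpl; intros rho Hc Hk.
  - apply Hc; auto.
  - reflexivity.
  - rewrite (IHt1 rho), (IHt2 rho). reflexivity.
    all: intros; first [apply Hc|apply Hk]; right; inapp.
  - rewrite (IHt1 rho), (IHt2 rho), (IHt3 rho). reflexivity.
    all: intros; first [apply Hc|apply Hk]; right; inapp.
  - rewrite (IHt rho). reflexivity.
    all: intros; first [apply Hc|apply Hk]; right; inapp.
  - apply Hk; auto.
Qed.

Lemma subterm_refl : forall t, In t (subterms t).
Proof. destruct t; simpl; auto. Qed.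

Lemma holds_chg : forall I c k g (rho : env I),
  (forall s n t, In t (fterms g) -> In (Cst s n) (subterms t) -> c s n = cst I s n) ->
  (forall x y t, In t (fterms g) -> In (KDiff x y) (subterms t) -> k x y = kdf I x y) ->
  (holds (chg I c k) rho g <-> holds I rho g).
Proof. induction g; simpl; intros rho Hc Hk; try tauto.
  - rewrite (ev_chg I c k t1 rho), (ev_chg I c k t2 rho). reflexivity.
    all: intros; match goal with |- _ = cst _ ?s ?n => apply (Hc s n (Cst s n)) | |- _ = kdf _ ?x ?y => apply (Hk x y (KDiff x y)) end; [simpl; inapp | apply subterm_refl].
  - rewrite (IHg rho Hc Hk). tauto.
  - rewrite (IHg1 rho), (IHg2 rho). tauto.
    all: intros; first [eapply Hc|eapply Hk]; eauto; simpl; inapp.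
  - rewrite (IHg1 rho), (IHg2 rho). tauto.
    all: intros; first [eapply Hc|eapply Hk]; eauto; simpl; inapp.
  - rewrite (IHg1 rho), (IHg2 rho). tauto.
    all: intros; first [eapply Hc|eapply Hk]; eauto; simpl; inapp.
  - split; intros [d Hd]; exists d; [apply (IHg _ Hc Hk) | apply (IHg _ Hc Hk)]; exact Hd.
  - split; intros Hd d; [apply (IHg _ Hc Hk) | apply (IHg _ Hc Hk)]; apply Hd.
Qed.


Opaque term_eq_dec.
Ltac dteq := match goal with |- context [term_eq_dec ?a ?b] => destruct (term_eq_dec a b) end.

Definition pv (I : Interp) (rho : env I) (t : term) : sigT (dom I) :=
  existT (dom I) (sort_of t) (ev I rho t).

Lemma sort_substT : forall x t s, sort_of t = sort_of x -> sort_of (substT x t s) = sort_of s.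
Proof. intros x t s H. destruct s; simpl; dteq; subst; auto. Qed.

Lemma ev_substT : forall I rho x t s, pv I rho x = pv I rho t ->
  pv I rho (substT x t s) = pv I rho s.
Proof. unfold pv. intros I rho x t s H. induction s; simpl; dteq;
  try (subst; symmetry; exact H); try reflexivity; simpl.
  - rewrite (co_pv _ SArr _ _ _ _ IHs1), (co_pv _ SIdx _ _ _ _ IHs2). reflexivity.
  - rewrite (co_pv _ SArr _ _ _ _ IHs1), (co_pv _ SIdx _ _ _ _ IHs2), (co_pv _ SElem _ _ _ _ IHs3). reflexivity.
  - rewrite (co_pv _ SElem _ _ _ _ IHs). reflexivity.
Qed.

Lemma holds_substF : forall I x t g rho, (forall rho, pv I rho x = pv I rho t) ->
  (holds I rho (substF x t g) <-> holds I rho g).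
Proof. intros I x t g. induction g; simpl; intros rho H; try tauto.
  - apply feq_pv; apply ev_substT; auto.
  - rewrite IHg; auto. tauto.
  - rewrite IHg1, IHg2; auto. tauto.
  - rewrite IHg1, IHg2; auto. tauto.
  - rewrite IHg1, IHg2; auto. tauto.
  - split; intros [d Hd]; exists d; [rewrite <- IHg|rewrite IHg]; auto.
  - split; intros Hd d; [rewrite <- IHg|rewrite IHg]; auto.
Qed.

Lemma holds_expand : forall I defs g rho,
  (forall d, In d defs -> forall rho, pv I rho (fst d) = pv I rho (snd d)) ->
  (holds I rho (expand defs g) <-> holds I rho g).
Proof. intros I defs. induction defs as [|d ds IH]; simpl; intros g rho H; [tauto|].
  unfold expand in *; simpl. rewrite IH by auto. apply holds_substF; auto. Qed.

Definition expandT (defs : list (term * term)) (t : term) : term :=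
  fold_left (fun s d => substT (fst d) (snd d) s) defs t.

Lemma expand_FImp : forall defs g h, expand defs (FImp g h) = FImp (expand defs g) (expand defs h).
Proof. induction defs; intros; [reflexivity|]. unfold expand, expandT in *; simpl; apply IHdefs. Qed.
Lemma expand_FNot : forall defs g, expand defs (FNot g) = FNot (expand defs g).
Proof. induction defs; intros; [reflexivity|]. unfold expand, expandT in *; simpl; apply IHdefs. Qed.
Lemma expand_FEq : forall defs a b, expand defs (FEq a b) = FEq (expandT defs a) (expandT defs b).
Proof. induction defs; intros; [reflexivity|]. unfold expand, expandT in *; simpl; apply IHdefs. Qed.
Lemma expand_FAnd : forall defs g h, expand defs (FAnd g h) = FAnd (expand defs g) (expand defs h).
Proof. induction defs; intros; [reflexivity|]. unfold expand, expandT in *; simpl; apply IHdefs. Qed.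
Lemma expand_FOr : forall defs g h, expand defs (FOr g h) = FOr (expand defs g) (expand defs h).
Proof. induction defs; intros; [reflexivity|]. unfold expand, expandT in *; simpl; apply IHdefs. Qed.
Lemma expand_FEx : forall defs s n g, expand defs (FEx s n g) = FEx s n (expand defs g).
Proof. induction defs; intros; [reflexivity|]. unfold expand, expandT in *; simpl; apply IHdefs. Qed.
Lemma expand_FAll : forall defs s n g, expand defs (FAll s n g) = FAll s n (expand defs g).
Proof. induction defs; intros; [reflexivity|]. unfold expand, expandT in *; simpl; apply IHdefs. Qed.
Lemma expand_FBot : forall defs, expand defs FBot = FBot.
Proof. induction defs; intros; [reflexivity|]. unfold expand in *; simpl; apply IHdefs. Qed.
Lemma expand_FTop : forall defs, expand defs FTop = FTop.
Proof. induction defs; intros; [reflexivity|]. unfold expand in *; simpl; apply IHdefs. Qed.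

Lemma NV_substT : forall x t s, NV t -> NV s -> NV (substT x t s).
Proof. intros x t s Ht. induction s; simpl; dteq; simpl; intuition. Qed.

Lemma NV_expandT : forall defs s, (forall d, In d defs -> NV (snd d)) -> NV s -> NV (expandT defs s).
Proof. induction defs; simpl; intros; auto. unfold expandT in *; simpl. apply IHdefs; auto.
  apply NV_substT; auto. Qed.

Lemma expandT_Var : forall defs s n, (forall d, In d defs -> exists s' n', fst d = Cst s' n') ->
  expandT defs (Var s n) = Var s n.
Proof. induction defs; simpl; intros; auto. unfold expandT in *; simpl.
  destruct (H a) as (s'&n'&E); auto. rewrite E. simpl.
  destruct (term_eq_dec (Var s n) (Cst s' n')); [discriminate|]. apply IHdefs; auto. Qed.

Lemma expandT_KDiff : forall defs a c, (forall d, In d defs -> exists s' n', fst d = Cst s' n') ->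
  expandT defs (KDiff a c) = KDiff a c.
Proof. induction defs; simpl; intros; auto. unfold expandT in *; simpl.
  destruct (H a) as (s'&n'&E); auto. rewrite E. simpl.
  destruct (term_eq_dec (KDiff a0 c) (Cst s' n')); [discriminate|]. apply IHdefs; auto. Qed.

Lemma name_expand_NV : forall defs t, (forall d, In d defs -> NV (snd d) /\ exists s' n', fst d = Cst s' n') ->
  isName t -> forall a i, expandT defs t = Read a i -> NV (Read a i).
Proof. intros defs t H Hn a i E. destruct t; simpl in Hn; try contradiction.
  - rewrite <- E. apply NV_expandT; simpl; auto. intros; apply H; auto.
  - rewrite expandT_Var in E; [discriminate|]. intros; apply H; auto.
  - rewrite expandT_KDiff in E; [discriminate|]. intros; apply H; auto.
Qed.

Lemma wfT_substT_rev : forall x t s, wfT x -> sort_of t = sort_of x -> wfT (substT x t s) -> wfT s.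
Proof. intros x t s Hx Hs. induction s; simpl; dteq;
  try (subst; auto; fail); simpl; intuition;
  repeat match goal with H : context [sort_of (substT x t ?a)] |- _ => rewrite (sort_substT x t a Hs) in H end; auto.
Qed.

Lemma wfF_substF_rev : forall x t g, wfT x -> sort_of t = sort_of x -> wfF (substF x t g) -> wfF g.
Proof. intros x t g Hx Hs. induction g; simpl; intuition.
  - apply (wfT_substT_rev x t); auto.
  - apply (wfT_substT_rev x t); auto.
  - rewrite !sort_substT in H2 by auto. auto.
Qed.

Lemma wfF_expand_rev : forall defs g, (forall d, In d defs -> wfT (fst d) /\ sort_of (snd d) = sort_of (fst d)) ->
  wfF (expand defs g) -> wfF g.
Proof. induction defs; simpl; intros; auto. unfold expand in *; simpl in *.
  apply IHdefs in H0; auto. destruct (H a); auto. eapply wfF_substF_rev; eauto. Qed.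

Opaque term_eq_dec.

Section Det.
Variables (C V : Type) (next : C -> C + V) (dv : V).
Inductive Det : C -> V -> Prop :=
| Det_v : forall c v, next c = inr v -> Det c v
| Det_c : forall c c' v, next c = inl c' -> Det c' v -> Det c v.

Lemma Det_fun : forall c v, Det c v -> forall v', Det c v' -> v = v'.
Proof. induction 1; intros v' H'; inversion H'; subst; try congruence.
  apply IHDet. rewrite H in H1. injection H1; intros; subst; auto.
Qed.

Definition value (c : C) : V :=
  match excluded_middle_informative (exists v, Det c v) with
  | left H => proj1_sig (constructive_indefinite_description _ H)
  | right _ => dv end.

Lemma value_Det : forall c v, Det c v -> value c = v.
Proof. intros. unfold value. destruct excluded_middle_informative as [e|n].
  - destruct constructive_indefinite_description as [w Hw]. simpl. eapply Det_fun; eauto.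
  - exfalso; eauto. Qed.

Lemma value_nDet : forall c, ~ (exists v, Det c v) -> value c = dv.
Proof. intros. unfold value. destruct excluded_middle_informative; tauto. Qed.

Lemma value_eq : forall c, value c = match next c with inl c' => value c' | inr v => v end.
Proof. intros c. destruct (next c) as [c'|v] eqn:E.
  - destruct (classic (exists v, Det c' v)) as [[v Hv]|N].
    + rewrite (value_Det c' v Hv). apply value_Det. eapply Det_c; eauto.
    + rewrite (value_nDet c' N). apply value_nDet. intros [v Hv]. inversion Hv; subst; [congruence|].
      match goal with H : next c = inl _ |- _ => rewrite E in H; injection H; intros; subst end. eauto.
  - apply value_Det. apply Det_v; auto.
Qed.
End Det.

Definition rho0 (I : Interp) : env I := fun s _ => dflt I s.

Definition DefOK (d : term * term) : Prop :=
  (exists s n, fst d = Cst s n) /\ sort_of (fst d) = sort_of (snd d) /\ wfT (snd d) /\ NV (snd d) /\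
  (isName (snd d) \/ flatApp (snd d)).

Section Solver.
Variable I : Interp.
Variable defs : list (term * term).
Hypothesis HA : ArrModel I.
Hypothesis Hdefs : forall d, In d defs -> DefOK d.
Hypothesis Hnd : NoDup (map fst defs).

Definition keq (s : sort) (n : nat) (d : term * term) : bool :=
  if term_eq_dec (fst d) (Cst s n) then true else false.

Definition isdefb (s : sort) (n : nat) : bool := existsb (keq s n) defs.

Definition defOf (s : sort) (n : nat) : option term :=
  match find (keq s n) defs with Some d => Some (snd d) | None => None end.

Lemma isdefb_spec : forall s n, isdefb s n = true <-> In (Cst s n) (map fst defs).
Proof. intros. unfold isdefb. rewrite existsb_exists. split.
  - intros [d [Hd Hk]]. unfold keq in Hk. destruct term_eq_dec; [|discriminate].
    rewrite <- e. apply in_map; auto.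
  - intros Hin. apply in_map_iff in Hin. destruct Hin as [d [E Hd]]. exists d; split; auto.
    unfold keq. destruct term_eq_dec; congruence.
Qed.

Lemma defOf_Some : forall s n t, defOf s n = Some t -> In (Cst s n, t) defs.
Proof. intros. unfold defOf in H. destruct (find (keq s n) defs) eqn:E; [|discriminate].
  injection H; intros; subst. apply find_some in E. destruct E. unfold keq in H1.
  destruct term_eq_dec; [|discriminate]. destruct p; simpl in *; subst; auto. Qed.

Lemma defOf_In : forall s n t, In (Cst s n, t) defs -> defOf s n = Some t.
Proof. intros s n t Hin. unfold defOf. destruct (find (keq s n) defs) eqn:E.
  - apply find_some in E. destruct E as [Hp Hk]. unfold keq in Hk.
    destruct term_eq_dec as [e|]; [|discriminate]. f_equal.
    destruct p as [x y]; simpl in *; subst.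
    clear -Hnd Hin Hp. induction defs as [|d ds IH]; simpl in *; [contradiction|].
    inversion Hnd as [|? ? H1 H2]; subst. destruct Hin as [Hin|Hin]; destruct Hp as [Hp|Hp]; subst.
    all: try congruence. all: try (apply IH; auto).
    all: exfalso; apply H1; simpl in *; apply in_map_iff; eexists; split; [|eassumption]; reflexivity.
  - exfalso. eapply find_none in E; eauto. unfold keq in E. simpl in E.
    destruct term_eq_dec; congruence.
Qed.

Lemma isdefb_defOf : forall s n, isdefb s n = false -> defOf s n = None.
Proof. intros. destruct (defOf s n) eqn:E; auto. apply defOf_Some in E.
  assert (isdefb s n = true) by (apply isdefb_spec; apply in_map_iff; exists (Cst s n, t); auto). congruence. Qed.

Lemma defOf_OK : forall s n t, defOf s n = Some t -> sort_of t = s /\ wfT t /\ NV t /\ (isName t \/ flatApp t).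
Proof. intros. apply defOf_Some in H. apply Hdefs in H. unfold DefOK in H. simpl in H. intuition. Qed.

Definition name_idx (t : term) : nat + dom I SIdx :=
  match t with
  | Cst SIdx m => if isdefb SIdx m then inl m else inr (cst I SIdx m)
  | _ => inr (co I SIdx (ev I (rho0 I) t)) end.

Definition next1 (n : nat) : nat + dom I SIdx :=
  match defOf SIdx n with Some t => name_idx t | None => inr (dflt I SIdx) end.

Definition val1 : nat -> dom I SIdx := value _ _ next1 (dflt I SIdx).

Definition c1 : forall s, nat -> dom I s :=
  fun s => match s as s0 return nat -> dom I s0 with
           | SIdx => fun n => if isdefb SIdx n then val1 n else cst I SIdx n
           | SElem => cst I SElem
           | SArr => cst I SArr end.

Definition I1 : Interp := chg I c1 (kdf I).

Definition idxv (t : term) : dom I SIdx := co I SIdx (ev I1 (rho0 I1) t).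

Definition C2 : Type := ((nat * dom I SIdx) + nat)%type.

Definition arrname (t : term) : nat + dom I SArr :=
  match t with
  | Cst SArr m => if isdefb SArr m then inl m else inr (cst I SArr m)
  | _ => inr (co I SArr (ev I1 (rho0 I1) t)) end.

Definition arrcell (t : term) (q : dom I SIdx) : C2 + dom I SElem :=
  match arrname t with inl m => inl (inl (m, q)) | inr B => inr (rd I B q) end.

Definition elemname (t : term) : C2 + dom I SElem :=
  match t with
  | Cst SElem m => if isdefb SElem m then inl (inr m) else inr (cst I SElem m)
  | _ => inr (co I SElem (ev I1 (rho0 I1) t)) end.

Definition next2 (c : C2) : C2 + dom I SElem :=
  match c with
  | inl (x, q) =>
      match defOf SArr x with
      | Some (Write n1 n2 n3) =>
          if excluded_middle_informative (q = idxv n2) then elemname n3 else arrcell n1 q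
      | Some (CArr n) => elemname n
      | Some t => arrcell t q
      | None => inr (dflt I SElem) end
  | inr e =>
      match defOf SElem e with
      | Some (Read n1 n2) => arrcell n1 (idxv n2)
      | Some t => elemname t
      | None => inr (dflt I SElem) end
  end.

Definition val2 : C2 -> dom I SElem := value _ _ next2 (dflt I SElem).

Definition elemval (t : term) : dom I SElem :=
  match elemname t with inl c => val2 c | inr v => v end.

Definition next3 (x : nat) : nat + dom I SArr :=
  match defOf SArr x with
  | Some (Write n1 _ _) => arrname n1
  | Some (CArr n) => inr (ca I (elemval n))
  | Some t => arrname t
  | None => inr (ca I (dflt I SElem)) end.

Definition G : nat -> dom I SArr := value _ _ next3 (ca I (dflt I SElem)).

Definition W : list (dom I SIdx) :=
  flat_map (fun d => match snd d with Write _ n2 _ => [idxv n2] | _ => [] end) defs.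

Definition Arrv (x : nat) : dom I SArr :=
  fold_right (fun q acc => wr I acc q (val2 (inl (x, q)))) (G x) W.

Lemma rd_fold : forall l x q,
  rd I (fold_right (fun q acc => wr I acc q (val2 (inl (x, q)))) (G x) l) q =
  if excluded_middle_informative (In q l) then val2 (inl (x, q)) else rd I (G x) q.
Proof. destruct HA as (Heq&Hne&_&_). induction l as [|a l IH]; intros x q; simpl.
  - destruct excluded_middle_informative as [[]|]; auto.
  - destruct (classic (a = q)) as [E|N].
    + subst. rewrite Heq; auto. destruct excluded_middle_informative as [|n]; auto. exfalso; auto.
    + rewrite Hne; auto. rewrite IH. destruct excluded_middle_informative as [i|n];
      destruct excluded_middle_informative as [i'|n']; auto; exfalso; intuition.
Qed.

Lemma In_W : forall x n1 n2 n3, defOf SArr x = Some (Write n1 n2 n3) -> In (idxv n2) W.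
Proof. intros. apply defOf_Some in H. unfold W. apply in_flat_map. exists (Cst SArr x, Write n1 n2 n3).
  split; simpl; auto. Qed.

Lemma next3_inr : forall x B, next3 x = inr B -> Det _ _ next3 x B.
Proof. intros. apply Det_v; auto. Qed.

Lemma G_generic : forall x q, ~ In q W -> rd I (G x) q = val2 (inl (x, q)).
Proof.
  destruct HA as (Heq&Hne&Hext&Hroc).
  intros x q Hq. destruct (classic (exists B, Det _ _ next3 x B)) as [[B HB]|N].
  - unfold G. rewrite (value_Det _ _ _ _ x B HB). induction HB as [x B E|x m B E HB IH].
    + unfold val2. rewrite value_eq. fold val2. unfold next3 in E. unfold next2.
      destruct (defOf SArr x) as [t|] eqn:Ed.
      * destruct t; try (unfold arrcell; rewrite E; reflexivity).
        -- destruct excluded_middle_informative as [e|n].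
           ++ exfalso. apply Hq. rewrite e. eapply In_W; eauto.
           ++ unfold arrcell. rewrite E. reflexivity.
        -- injection E; intros; subst. rewrite Hroc. unfold elemval.
           destruct (elemname t); reflexivity.
      * injection E; intros; subst. rewrite Hroc. reflexivity.
    + rewrite IH. unfold val2 at 2. rewrite value_eq. fold val2. unfold next3 in E. unfold next2.
      destruct (defOf SArr x) as [t|] eqn:Ed; [|discriminate].
      destruct t; try (unfold arrcell; rewrite E; reflexivity).
      * destruct excluded_middle_informative as [e|n].
        -- exfalso. apply Hq. rewrite e. eapply In_W; eauto.
        -- unfold arrcell. rewrite E. reflexivity.
      * discriminate.
  - unfold G. rewrite value_nDet; auto. rewrite Hroc. unfold val2. rewrite value_nDet; auto.
    intros [v Hv]. apply N. clear N. remember (inl (x, q) : C2) as c eqn:Ec. revert x Ec.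
    induction Hv as [c v E|c c' v E Hv IH]; intros x Ec; subst.
    + destruct (next3 x) as [m|B] eqn:E3; [|exists B; apply Det_v; auto].
      exfalso. unfold next3 in E3. unfold next2 in E.
      destruct (defOf SArr x) as [t|] eqn:Ed; [|discriminate].
      destruct t; try (unfold arrcell in E; rewrite E3 in E; discriminate).
      * destruct excluded_middle_informative as [e|n].
        -- apply Hq. rewrite e. eapply In_W; eauto.
        -- unfold arrcell in E; rewrite E3 in E; discriminate.
      * discriminate.
    + destruct (next3 x) as [m|B] eqn:E3; [|exists B; apply Det_v; auto].
      unfold next3 in E3. unfold next2 in E.
      destruct (defOf SArr x) as [t|] eqn:Ed; [|discriminate].
      assert (Hc : c' = inl (m, q)).
      { destruct t; try (unfold arrcell in E; rewrite E3 in E; injection E; intros; subst; reflexivity).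
        - destruct excluded_middle_informative as [e|n].
          + exfalso. apply Hq. rewrite e. eapply In_W; eauto.
          + unfold arrcell in E; rewrite E3 in E; injection E; intros; subst; reflexivity.
        - discriminate. }
      destruct (IH m Hc) as [B HB]. exists B. eapply Det_c; [|eauto]. unfold next3; rewrite Ed; exact E3.
Qed.

Lemma rd_Arrv : forall x q, rd I (Arrv x) q = val2 (inl (x, q)).
Proof. intros. unfold Arrv. rewrite rd_fold. destruct excluded_middle_informative; auto.
  apply G_generic; auto. Qed.


Definition cF : forall s, nat -> dom I s :=
  fun s => match s as s0 return nat -> dom I s0 with
           | SIdx => c1 SIdx
           | SElem => fun n => if isdefb SElem n then val2 (inr n) else cst I SElem n
           | SArr => fun n => if isdefb SArr n then Arrv n else cst I SArr n end.

Definition IF : Interp := chg I cF (kdf I).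

Lemma N1 : forall t (rho : env I), sort_of t = SIdx -> isName t -> NV t ->
  co I SIdx (ev IF rho t) = idxv t /\ idxv t = match name_idx t with inl m => val1 m | inr v => v end.
Proof. intros t rho Hs Hn Hv. destruct t; simpl in *; try contradiction.
  - subst. unfold idxv. simpl. rewrite !co_id. unfold c1. destruct (isdefb SIdx n); auto.
  - unfold idxv. simpl. rewrite !co_id. auto.
Qed.

Lemma N2 : forall t (rho : env I), sort_of t = SArr -> isName t -> NV t ->
  co I SArr (ev IF rho t) = match arrname t with inl m => Arrv m | inr B => B end.
Proof. intros t rho Hs Hn Hv. destruct t; simpl in *; try contradiction; try discriminate.
  subst. rewrite co_id. simpl. destruct (isdefb SArr n); auto. Qed.

Lemma N3 : forall t (rho : env I), sort_of t = SElem -> isName t -> NV t ->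
  co I SElem (ev IF rho t) = elemval t.
Proof. intros t rho Hs Hn Hv. destruct t; simpl in *; try contradiction; try discriminate.
  subst. rewrite co_id. unfold elemval. simpl. destruct (isdefb SElem n); auto. Qed.

Lemma def_holds : forall d, In d defs -> forall rho, pv IF rho (fst d) = pv IF rho (snd d).
Proof.
  destruct HA as (Heq&Hne&Hext&Hroc).
  intros d Hd rho. pose proof (Hdefs d Hd) as (Hc&Hsrt&Hwf&Hnv&Hfl).
  destruct Hc as (s&n&Ef). destruct d as [x t]; simpl in *; subst x. simpl in Hsrt.
  assert (Edf : defOf s n = Some t) by (apply defOf_In; auto).
  assert (Eb : isdefb s n = true) by (apply isdefb_spec; apply in_map_iff; exists (Cst s n, t); auto).
  unfold pv. apply (pv_of_eq IF); auto. simpl. change (@co IF) with (@co I). unfold cF.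
  destruct s.
  -
    assert (Hn : isName t) by (destruct Hfl as [|F]; auto; destruct t; simpl in *; try discriminate; contradiction).
    destruct (N1 t rho (eq_sym Hsrt) Hn Hnv) as [A1 A2]. rewrite A1, A2.
    unfold c1. rewrite Eb. unfold val1. rewrite value_eq. unfold next1. rewrite Edf. reflexivity.
  -
    rewrite Eb. unfold val2. rewrite value_eq. fold val2. unfold next2. rewrite Edf.
    destruct t; simpl in Hsrt, Hfl; try discriminate; try (simpl in Hnv; contradiction).
    + assert (Hn : isName (Cst s n0)) by (simpl; trivial).
      pose proof (N3 (Cst s n0) rho (eq_sym Hsrt) Hn Hnv) as A. rewrite A. unfold elemval.
      destruct (elemname (Cst s n0)); reflexivity.
    + destruct Hfl as [[]|[Hn1 Hn2]]. simpl in Hwf, Hnv. destruct Hwf as (_&_&S1&S2). destruct Hnv as [V1 V2].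
      simpl. change (@co IF) with (@co I). rewrite co_id. destruct (N1 t2 rho S2 Hn2 V2) as [A1 _]. rewrite A1.
      rewrite (N2 t1 rho S1 Hn1 V1). unfold arrcell. destruct (arrname t1); [|reflexivity].
      rewrite rd_Arrv. reflexivity.
  -
    rewrite Eb. apply Hext. intros q. rewrite rd_Arrv. unfold val2. rewrite value_eq. fold val2.
    unfold next2. rewrite Edf.
    destruct t; simpl in Hsrt, Hfl; try discriminate; try (simpl in Hnv; contradiction).
    + assert (Hn : isName (Cst s n0)) by (simpl; trivial).
      rewrite (N2 (Cst s n0) rho (eq_sym Hsrt) Hn Hnv). unfold arrcell.
      destruct (arrname (Cst s n0)); [|reflexivity]. rewrite rd_Arrv. reflexivity.
    + destruct Hfl as [[]|(Hn1&Hn2&Hn3)]. simpl in Hwf, Hnv. destruct Hwf as (_&_&_&S1&S2&S3).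
      destruct Hnv as (V1&V2&V3). simpl. change (@co IF) with (@co I). rewrite co_id.
      destruct (N1 t2 rho S2 Hn2 V2) as [A1 _].
      destruct excluded_middle_informative as [e|ne].
      * rewrite Heq by (rewrite e; exact A1). rewrite (N3 t3 rho S3 Hn3 V3).
        unfold elemval. destruct (elemname t3); reflexivity.
      * rewrite Hne by (rewrite A1; intro Hc; apply ne; symmetry; exact Hc). rewrite (N2 t1 rho S1 Hn1 V1). unfold arrcell.
        destruct (arrname t1); [|reflexivity]. rewrite rd_Arrv. reflexivity.
    + destruct Hfl as [[]|Hn]. simpl in Hwf, Hnv. destruct Hwf as (_&S1).
      simpl. change (@co IF) with (@co I). rewrite co_id. rewrite Hroc. rewrite (N3 t rho S1 Hn Hnv).
      unfold elemval. destruct (elemname t); reflexivity.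
Qed.

End Solver.

Theorem solver_main : forall (I : Interp) defs, ArrModel I -> (forall d, In d defs -> DefOK d) ->
  NoDup (map fst defs) ->
  exists c : forall s, nat -> dom I s,
    (forall s n, ~ In (Cst s n) (map fst defs) -> c s n = cst I s n) /\
    (forall d, In d defs -> forall rho, pv (chg I c (kdf I)) rho (fst d) = pv (chg I c (kdf I)) rho (snd d)).
Proof. intros I defs HA Hd Hnd. exists (cF I defs). split.
  - intros s n Hn. assert (isdefb defs s n = false).
    { destruct (isdefb defs s n) eqn:E; auto. apply isdefb_spec in E. contradiction. }
    destruct s; simpl; rewrite H; reflexivity.
  - intros. apply (def_holds I defs HA Hd Hnd); auto.
Qed.

Opaque term_eq_dec.

Lemma subterms_trans : forall t u v, In u (subterms t) -> In v (subterms u) -> In v (subterms t).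
Proof. induction t; simpl; intros u v Hu Hv; destruct Hu as [Hu|Hu]; subst; simpl in *; auto;
  right; repeat (apply in_app_or in Hu; destruct Hu as [Hu|Hu]); eauto using in_or_app;
  apply in_or_app; right; apply in_or_app; eauto. Qed.

Lemma fterms_sub : forall g t u, In t (fterms g) -> In u (subterms t) -> In u (fterms g).
Proof. induction g; simpl; intros t u Ht Hu; try contradiction; eauto;
  apply in_app_or in Ht; apply in_or_app; destruct Ht as [Ht|Ht]; eauto using subterms_trans. Qed.

Lemma flatten_sound : forall I A f F, ArrModel I -> modelsA I A -> (forall rho, holds I rho f) ->
  Flatten A f F -> exists I', ArrModel I' /\ modelsA I' (A ++ F).
Proof.
  intros I A f F HA HmA Hf (f'&defs&EF&Hd&Hnd&Hexp&Hfl).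
  assert (HOK : forall d, In d defs -> DefOK d).
  { intros d Hin. destruct (Hd d Hin) as ((s&n&E&_&_)&Hs&Hw&Hv). unfold DefOK.
    assert (Hfd : flatF (FEq (fst d) (snd d))).
    { apply Hfl. rewrite EF. right. apply in_map_iff. exists d; auto. }
    simpl in Hfd. repeat split; eauto. apply noVars_NV; auto. tauto. }
  destruct (solver_main I defs HA HOK Hnd) as (c&Hc1&Hc2).
  set (I' := chg I c (kdf I)).
  assert (Hfresh : forall s n, In (Cst s n) (map fst defs) -> ~ InT (Cst s n) A /\ ~ In (Cst s n) (fterms f)).
  { intros s n Hin. apply in_map_iff in Hin. destruct Hin as [d [E Hin]].
    destruct (Hd d Hin) as ((s'&n'&E'&H1&H2)&_). rewrite E in E'. injection E'; intros; subst; auto. }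
  exists I'. split; [exact HA|].
  intros g Hg. apply in_app_or in Hg. destruct Hg as [Hg|Hg].
  - intros rho.
    assert (H1 : forall s n t, In t (fterms g) -> In (Cst s n) (subterms t) -> c s n = cst I s n).
    { intros s n t Ht Hs. apply Hc1. intros Hin. apply (proj1 (Hfresh s n Hin)).
      exists g; split; auto. eapply fterms_sub; eauto. }
    apply (proj2 (holds_chg I c (kdf I) g rho H1 (fun _ _ _ _ _ => eq_refl))). exact (HmA g Hg rho).
  - rewrite EF in Hg. destruct Hg as [Hg|Hg].
    + subst g. intros rho. apply (holds_expand I' defs f' rho); auto.
      rewrite Hexp.
      assert (H1 : forall s n t, In t (fterms f) -> In (Cst s n) (subterms t) -> c s n = cst I s n).
      { intros s n t Ht Hs. apply Hc1. intros Hin. apply (proj2 (Hfresh s n Hin)).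
        eapply fterms_sub; eauto. }
      apply (proj2 (holds_chg I c (kdf I) f rho H1 (fun _ _ _ _ _ => eq_refl))). exact (Hf rho).
    + apply in_map_iff in Hg. destruct Hg as [d [E Hin]]. subst g. intros rho. simpl.
      apply (eq_of_pv I'). apply Hc2; auto.
Qed.

Lemma flatten_wf : forall A f F, wfF f -> Flatten A f F -> forall g, In g F -> wfF g.
Proof.
  intros A f F Hw (f'&defs&EF&Hd&Hnd&Hexp&Hfl) g Hg. rewrite EF in Hg. destruct Hg as [Hg|Hg].
  - subst g. apply (wfF_expand_rev defs); [|rewrite Hexp; auto].
    intros d Hin. destruct (Hd d Hin) as ((s&n&E&_&_)&Hs&_). rewrite E. simpl. split; auto.
    rewrite <- Hs, E. reflexivity.
  - apply in_map_iff in Hg. destruct Hg as [d [E Hin]]. subst. destruct (Hd d Hin) as ((s&n&E&_&_)&Hs&Hw'&_).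
    simpl. rewrite E. simpl. rewrite E in Hs. simpl in Hs. auto.
Qed.

Opaque term_eq_dec.

Lemma wfT_sub : forall t u, wfT t -> In u (subterms t) -> wfT u.
Proof. induction t; simpl; intros u Hw Hu; destruct Hu as [Hu|Hu]; subst; simpl; auto; try contradiction;
  intuition; repeat (apply in_app_or in Hu; destruct Hu as [Hu|Hu]); eauto. Qed.

Lemma wfF_fterms : forall g t, wfF g -> In t (fterms g) -> wfT t.
Proof. induction g; simpl; intros t Hw Ht; try contradiction; intuition;
  apply in_app_or in Ht; destruct Ht; eauto using wfT_sub. Qed.

Lemma wf_InT : forall A t, (forall f, In f A -> wfF f) -> InT t A -> wfT t.
Proof. intros A t HA [f [Hf Ht]]. eapply wfF_fterms; eauto. Qed.

Definition EntOK (a t : term) (r : formula) (c : term) : Prop :=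
  wfT a /\ sort_of a = SArr /\ wfT c /\ sort_of c = SArr /\ wfT t /\ wfF r /\
  match t with
  | Read b i => forall N rho, ArrModel N -> holds N rho r ->
      rd N (co N SArr (ev N rho a)) (co N SIdx (ev N rho i)) =
      rd N (co N SArr (ev N rho c)) (co N SIdx (ev N rho i))
  | CArr v => (r = FTop /\ exists j u, c = Write a j u \/ a = Write c j u) \/
      (forall N rho, ArrModel N -> holds N rho r -> co N SArr (ev N rho a) = co N SArr (ev N rho c))
  | _ => False end.

Definition PiOK (pi : pimap) : Prop := forall a t r c, pi a t = Some (r, c) -> EntOK a t r c.

Lemma PiOK_pi0 : PiOK pi0.
Proof. intros a t r c H. discriminate. Qed.

Lemma PiOK_upd : forall pi a t r c, PiOK pi -> EntOK a t r c -> PiOK (upd pi a t (Some (r, c))).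
Proof. intros pi a t r c H He a' t' r' c' E. unfold upd in E.
  destruct (term_eq_dec a a'); [destruct (term_eq_dec t t')|]; subst; eauto.
  injection E; intros; subst; auto. Qed.

Lemma ent_of : forall pi a t, PiOK pi -> pi a t <> None -> exists r c, pi a t = Some (r, c) /\ EntOK a t r c.
Proof. intros. destruct (pi a t) as [[r c]|] eqn:E; [|contradiction]. exists r, c; split; auto. Qed.

Lemma Reason_read : forall pi, PiOK pi -> forall a t R, Reason pi a t R -> forall b i, t = Read b i ->
  wfF R /\ forall N rho, ArrModel N -> holds N rho R ->
    rd N (co N SArr (ev N rho a)) (co N SIdx (ev N rho i)) =
    rd N (co N SArr (ev N rho b)) (co N SIdx (ev N rho i)).
Proof. intros pi Hpi a t R HR. induction HR as [a t Hn Hb|a t r c R E Hnb HR IH]; intros b i Et; subst.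
  - split; [simpl; auto|]. destruct Hb as [Hb|[i' Hb]].
    + exfalso. destruct (ent_of pi a (Read b i) Hpi Hn) as (r&c&_&(_&Hs&_)). subst. simpl in Hs. discriminate.
    + injection Hb; intros; subst. auto.
  - destruct (IH b i eq_refl) as [Hw IH']. destruct (Hpi _ _ _ _ E) as (_&_&_&_&_&Hwr&Hm).
    split; [simpl; auto|]. intros N rho HN [H1 H2]. rewrite (Hm N rho HN H2). apply IH'; auto.
Qed.

Lemma Reason_carr : forall pi, PiOK pi -> forall a t S, UpdIdx pi a t S -> forall v, t = CArr v ->
  forall R, Reason pi a t R ->
  wfF R /\ (forall k, In k S -> wfT k /\ sort_of k = SIdx) /\
  forall N rho, ArrModel N -> holds N rho R -> forall q, (forall k, In k S -> q <> co N SIdx (ev N rho k)) ->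
    rd N (co N SArr (ev N rho a)) q = co N SElem (ev N rho v).
Proof. intros pi Hpi a t S HU. induction HU as [a t Hn Ea|a t b j u S E Hne Hb HU IH|a t r c S E Hne Hnw HU IH];
  intros v Et R HR; subst.
  - inversion HR; subst.
    + split; [simpl; auto|]. split; [intros k []|]. intros N rho HN _ q _. destruct HN as (_&_&_&Hroc).
      simpl. rewrite co_id. apply Hroc.
    + exfalso. apply H0. left; auto.
  - inversion HR as [? ? Hn' Hb'|? ? r c R' E' Hnb HR']; subst.
    + exfalso. destruct Hb' as [Hb'|[i Hb']]; [congruence|discriminate].
    + rewrite E in E'. injection E'; intros; subst.
      destruct (IH v eq_refl R' HR') as (Hw&Hk&Hs).
      destruct (Hpi _ _ _ _ E) as (Hwa&Hsa&Hwb&Hsb&_&_&_).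
      split; [simpl; auto|]. split.
      * intros k [Hk'|Hk']; [subst k|auto]. destruct Hb as [Hb|Hb]; subst; simpl in *; intuition.
      * intros N rho HN [H1 _] q Hq. destruct HN as (Heq&Hne'&Hext&Hroc).
        assert (Hq' : q <> co N SIdx (ev N rho j)) by (apply Hq; left; auto).
        destruct Hb as [Hb|Hb]; subst; simpl in *.
        -- specialize (Hs N rho (conj Heq (conj Hne' (conj Hext Hroc))) H1 q (fun k Hk => Hq k (or_intror Hk))).
           simpl in Hs. rewrite co_id in Hs. rewrite Hne' in Hs by auto. exact Hs.
        -- rewrite co_id. rewrite Hne' by auto.
           apply (Hs N rho (conj Heq (conj Hne' (conj Hext Hroc))) H1 q (fun k Hk => Hq k (or_intror Hk))).
  - inversion HR as [? ? Hn' Hb'|? ? r' c' R' E' Hnb HR']; subst.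
    + exfalso. destruct Hb' as [Hb'|[i Hb']]; [congruence|discriminate].
    + rewrite E in E'. injection E'; intros; subst.
      destruct (IH v eq_refl R' HR') as (Hw&Hk&Hs).
      destruct (Hpi _ _ _ _ E) as (Hwa&Hsa&Hwb&Hsb&_&Hwr&Hm).
      destruct Hm as [Hm|Hm]; [contradiction|].
      split; [simpl; auto|]. split; auto.
      intros N rho HN [H1 H2] q Hq. rewrite (Hm N rho HN H2). apply Hs; auto.
Qed.

Opaque term_eq_dec.

Lemma maxv_freshv : forall S k, In k S -> maxv k <= freshv S.
Proof. induction S; simpl; intros k Hk; [contradiction|]. destruct Hk; subst; [lia|].
  specialize (IHS k H). lia. Qed.

Lemma holds_bigand : forall N rho l, holds N rho (bigand l) -> forall g, In g l -> holds N rho g.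
Proof. induction l; simpl; intros H g Hg; [contradiction|]. destruct H; destruct Hg; subst; auto. Qed.

Lemma wfF_bigand : forall l, (forall g, In g l -> wfF g) -> wfF (bigand l).
Proof. induction l; simpl; intros; auto. Qed.

Lemma exdiff_sem : forall N rho S, holds N rho (exdiff S) ->
  exists d, forall k, In k S -> d <> co N SIdx (ev N rho k).
Proof. intros N rho S. unfold exdiff. simpl. intros [d Hd]. exists d. intros k Hk.
  pose proof (holds_bigand _ _ _ Hd (FNot (FEq (Var SIdx (freshv S)) k))) as H.
  simpl in H. intros E. apply H.
  - apply in_map_iff. exists k; auto.
  - rewrite upd_env_same. rewrite ev_upd_fresh by (apply maxv_freshv; auto). exact E.
Qed.

Lemma exdiff_wf : forall S, (forall k, In k S -> wfT k /\ sort_of k = SIdx) -> wfF (exdiff S).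
Proof. intros S H. unfold exdiff. simpl. apply wfF_bigand. intros g Hg. apply in_map_iff in Hg.
  destruct Hg as [k [E Hk]]. subst. simpl. destruct (H k Hk). auto. Qed.

Fixpoint tsize (t : term) : nat :=
  match t with
  | Read a i => S (tsize a + tsize i)
  | Write a i u => S (tsize a + tsize i + tsize u)
  | CArr v => S (tsize v)
  | KDiff a c => S (tsize a + tsize c)
  | _ => 1 end.

Lemma subterms_size : forall t u, In u (subterms t) -> tsize u <= tsize t.
Proof. induction t; simpl; intros u Hu; destruct Hu as [Hu|Hu]; subst; simpl; try lia; try contradiction;
  repeat (apply in_app_or in Hu; destruct Hu as [Hu|Hu]);
  try (apply IHt1 in Hu; lia); try (apply IHt2 in Hu; lia); try (apply IHt3 in Hu; lia); try (apply IHt in Hu; lia). Qed.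

Lemma diseq_sound : forall N A a c F, ArrModel N -> modelsA N A -> InArr a A -> InArr c A ->
  ~ InT (KDiff a c) A ->
  Flatten A (FImp (neqF a c) (neqF (Read a (KDiff a c)) (Read c (KDiff a c)))) F ->
  exists N', ArrModel N' /\ modelsA N' (A ++ F).
Proof.
  intros N A a c F HN HmN [Ha Hsa] [Hc Hsc] Hk HF.
  assert (HNV : NV a /\ NV c).
  { destruct HF as (f'&defs&EF&Hd&Hnd&Hexp&Hfl).
    assert (Hff : flatF f') by (apply Hfl; rewrite EF; left; auto).
    assert (Hdd : forall d, In d defs -> NV (snd d) /\ exists s' n', fst d = Cst s' n').
    { intros d Hin. destruct (Hd d Hin) as ((s&n&E&_)&_&_&Hv). split; [apply noVars_NV; auto|eauto]. }
    destruct f'; try (rewrite ?expand_FBot, ?expand_FTop, ?expand_FEq, ?expand_FNot, ?expand_FAnd,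
      ?expand_FOr, ?expand_FEx, ?expand_FAll in Hexp; discriminate).
    rewrite expand_FImp in Hexp. injection Hexp as _ Hexp.
    destruct f'2; try (rewrite ?expand_FBot, ?expand_FTop, ?expand_FEq, ?expand_FImp, ?expand_FAnd,
      ?expand_FOr, ?expand_FEx, ?expand_FAll in Hexp; discriminate).
    rewrite expand_FNot in Hexp. injection Hexp as Hexp.
    destruct f'2; try (rewrite ?expand_FBot, ?expand_FTop, ?expand_FNot, ?expand_FImp, ?expand_FAnd,
      ?expand_FOr, ?expand_FEx, ?expand_FAll in Hexp; discriminate).
    rewrite expand_FEq in Hexp. injection Hexp as E1 E2.
    simpl in Hff. destruct Hff as [_ [Hn1 Hn2]].
    pose proof (name_expand_NV defs t1 Hdd Hn1 _ _ E1) as V1.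
    pose proof (name_expand_NV defs t2 Hdd Hn2 _ _ E2) as V2.
    simpl in V1, V2. tauto. }
  destruct HNV as [Va Vc].
  set (Av := co N SArr (ev N (rho0 N) a)). set (Cv := co N SArr (ev N (rho0 N) c)).
  set (kq := epsilon (inhabits (dflt N SIdx)) (fun q => rd N Av q <> rd N Cv q)).
  set (kdf' := fun x y => if term_eq_dec x a then if term_eq_dec y c then kq else kdf N x y else kdf N x y).
  set (N' := chg N (cst N) kdf').
  assert (Hkd : forall x y, (x, y) <> (a, c) -> kdf' x y = kdf N x y).
  { intros x y Hxy. unfold kdf'. destruct (term_eq_dec x a); destruct (term_eq_dec y c); subst; auto.
    congruence. }
  assert (HevA : forall t rho, ~ In (KDiff a c) (subterms t) -> ev N' rho t = ev N rho t).
  { intros t rho Hn. apply ev_chg; auto. intros x y Hxy. apply Hkd. intros E. injection E; intros; subst; auto. }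
  assert (Hnsa : ~ In (KDiff a c) (subterms a)) by (intros H; apply subterms_size in H; simpl in H; lia).
  assert (Hnsc : ~ In (KDiff a c) (subterms c)) by (intros H; apply subterms_size in H; simpl in H; lia).
  apply (flatten_sound N' A (FImp (neqF a c) (neqF (Read a (KDiff a c)) (Read c (KDiff a c)))) F); auto.
  - intros g Hg rho.
    assert (H2 : forall x y t, In t (fterms g) -> In (KDiff x y) (subterms t) -> kdf' x y = kdf N x y).
    { intros x y t Ht Hs. apply Hkd. intros E. injection E; intros; subst. apply Hk.
      exists g; split; auto. eapply fterms_sub; eauto. }
    apply (proj2 (holds_chg N (cst N) kdf' g rho (fun _ _ _ _ _ => eq_refl) H2)).
    apply HmN; auto.
  - intros rho. simpl. intros Hne E. apply Hne. clear Hne.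
    rewrite (HevA a rho Hnsa), (HevA c rho Hnsc) in *.
    apply (feq_iff N _ _ SArr); auto.
    rewrite (ev_NV N a Va rho (rho0 N)), (ev_NV N c Vc rho (rho0 N)). fold Av Cv.
    destruct HN as (Heq&Hne&Hext&Hroc). apply Hext. intros q.
    destruct (classic (rd N Av q = rd N Cv q)) as [Hq|Hq]; auto. exfalso.
    assert (Hkq : rd N Av kq <> rd N Cv kq).
    { unfold kq. apply epsilon_spec. exists q; auto. }
    apply Hkq. rewrite co_id in E. revert E.
    unfold kdf'. simpl. destruct (term_eq_dec a a) as [_|n]; [|congruence].
    destruct (term_eq_dec c c) as [_|n]; [|congruence]. rewrite !co_id.
    rewrite (ev_NV N a Va rho (rho0 N)), (ev_NV N c Vc rho (rho0 N)). fold Av Cv. auto.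
Qed.

Opaque term_eq_dec.

Definition Inv (cfg : config) : Prop :=
  match cfg with
  | Unsat => False
  | Cfg A _ pi => (forall f, In f A -> wfF f) /\ (exists N, ArrModel N /\ modelsA N A) /\ PiOK pi
  end.

Lemma conflict_ok : forall A F f, (forall g, In g A -> wfF g) -> (exists N, ArrModel N /\ modelsA N A) ->
  wfF f -> (forall N rho, ArrModel N -> holds N rho f) -> Flatten A f F -> Inv (Cfg (A ++ F) None pi0).
Proof. intros A F f Hw [N [HN HmN]] Hwf Hv HF. split; [|split].
  - intros g Hg. apply in_app_or in Hg. destruct Hg; auto. eapply flatten_wf; eauto.
  - eapply flatten_sound; eauto.
  - apply PiOK_pi0.
Qed.

Lemma arr_emptysat : forall N A, ArrModel N -> modelsA N A -> EmptySatW A.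
Proof. intros N A HN HmN. exists N. split; auto. intros a i u _ rho. simpl.
  rewrite co_id. destruct HN as (Heq&_&_&_). apply Heq. reflexivity. Qed.

Ltac wfInT H := match type of H with InT ?t ?A => let W := fresh "WW" in
  assert (W : wfT t) by (eapply wf_InT; eauto); simpl in W end.

Lemma step_inv : forall c1 c2, step c1 c2 -> Inv c1 -> Inv c2.
Proof.
  intros c1 c2 Hs. destruct Hs; simpl; intros (Hw&HM&Hpi).
  - auto.
  - destruct HM as [N [HN HmN]]. apply H. eapply arr_emptysat; eauto.
  - split; [auto|split; auto]. apply PiOK_upd; auto. wfInT H.
    destruct WW as (Wa&Wi&Sa&Si). repeat split; simpl; auto.
  - split; [auto|split; auto]. apply PiOK_upd; auto. wfInT H.
    repeat split; simpl; intuition.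
  - split; [auto|split; auto]. apply PiOK_upd; auto.
    destruct (ent_of _ _ _ Hpi H0) as (r&c&_&(Wk&Sk&_&_&Wt&_&_)).
    simpl in Wk, Wt. destruct Wk as (Wa&Wj&Wu&Sa&Sj&Su). destruct Wt as (Wb&Wi&Sb&Si).
    repeat split; simpl; auto. rewrite Si, Sj; auto.
    intros N rho HN Hne. destruct HN as (Heq&Hne'&_&_). rewrite co_id. rewrite Hne'; auto.
    intros E. apply Hne. apply (feq_iff N _ _ SIdx); auto.
  - split; [auto|split; auto]. apply PiOK_upd; auto. wfInT H0.
    destruct (ent_of _ _ _ Hpi H1) as (r&c&_&(_&_&_&_&Wt&_&_)).
    simpl in Wt. destruct WW as (Wa&Wj&Wu&Sa&Sj&Su). destruct Wt as (Wb&Wi&Sb&Si).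
    repeat split; simpl; auto. rewrite Si, Sj; auto.
    intros N rho HN Hne. destruct HN as (Heq&Hne'&_&_). rewrite co_id. rewrite Hne'; auto.
    intros E. apply Hne. apply (feq_iff N _ _ SIdx); auto.
  - split; [auto|split; auto]. apply PiOK_upd; auto.
    destruct H0 as [Ha Sa]. destruct H1 as [Hc Sc]. wfInT Ha. wfInT Hc.
    destruct (ent_of _ _ _ Hpi H3) as (r&c'&_&(_&_&_&_&Wt&_&_)).
    simpl in Wt. repeat split; simpl; try tauto; try congruence.
    intros N rho HN Heq. apply (feq_iff N _ _ SArr) in Heq; auto. rewrite Heq. reflexivity.
  - split; [auto|split; auto]. apply PiOK_upd; auto.
    destruct H0 as [Ha Sa]. destruct H1 as [Hc Sc]. wfInT Ha. wfInT Hc.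
    destruct (ent_of _ _ _ Hpi H3) as (r&c'&_&(_&_&_&_&Wt&_&_)).
    simpl in Wt. repeat split; simpl; try tauto; try congruence.
    intros N rho HN Heq. apply (feq_iff N _ _ SArr) in Heq; auto. rewrite Heq. reflexivity.
  -
    destruct (ent_of _ _ _ Hpi H0) as (r1&c1&_&(_&_&_&_&Wt1&_&_)).
    destruct (ent_of _ _ _ Hpi H1) as (r2&c2&_&(_&_&_&_&Wt2&_&_)).
    simpl in Wt1, Wt2. destruct Wt1 as (Wb&Wi&Sb&Si). destruct Wt2 as (Wc&Wk&Sc&Sk).
    destruct (Reason_read pi Hpi a _ R1 H3 b i eq_refl) as [WR1 HR1].
    destruct (Reason_read pi Hpi a _ R2 H4 c k eq_refl) as [WR2 HR2].
    refine (conflict_ok _ _ _ Hw HM _ _ H5).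
    + simpl. repeat split; auto. rewrite Si, Sk; auto.
    + intros N rho HN. simpl. intros [[H1' H2'] H3']. rewrite co_id.
      apply (feq_iff N _ _ SIdx) in H3'; auto.
      rewrite <- (HR1 N rho HN H1'), <- (HR2 N rho HN H2'). rewrite H3'. reflexivity.
  -
    destruct HM as [N [HN HmN]].
    destruct H0 as [Ha Sa]. destruct H1 as [Hc Sc]. wfInT Ha. wfInT Hc.
    split; [|split].
    + intros g Hg. apply in_app_or in Hg. destruct Hg as [Hg|Hg]; auto. refine (flatten_wf _ _ _ _ H5 g Hg).
      simpl. repeat split; auto; rewrite ?Sa, ?Sc; auto.
    + refine (diseq_sound N A a c F HN HmN _ _ H3 H5); split; auto.
    + apply PiOK_pi0.
  -
    destruct (ent_of _ _ _ Hpi H) as (r1&c1&_&(Wv&_&_&_&Wt1&_&_)).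
    simpl in Wv, Wt1. destruct Wv as [Wv Sv]. destruct Wt1 as (Wb&Wi&Sb&Si).
    destruct (Reason_read pi Hpi _ _ R H1 b i eq_refl) as [WR HR].
    refine (conflict_ok _ _ _ Hw HM _ _ H2).
    + simpl. repeat split; auto.
    + intros N rho HN. simpl. intros H1'. idtac.
      rewrite <- (HR N rho HN H1'). simpl. rewrite !co_id. destruct HN as (_&_&_&Hroc). apply Hroc.
  - split; [auto|split; auto]. apply PiOK_upd; auto. wfInT H.
    repeat split; simpl; intuition.
  - split; [auto|split; auto]. apply PiOK_upd; auto.
    destruct (ent_of _ _ _ Hpi H) as (r&c&_&(Wk&Sk&_&_&Wt&_&_)).
    simpl in Wk, Wt. destruct Wk as (Wa&Wj&Wu&Sa&Sj&Su).
    repeat split; simpl; try tauto. left. split; auto. exists j, u. left; auto.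
  - split; [auto|split; auto]. apply PiOK_upd; auto. wfInT H1.
    destruct (ent_of _ _ _ Hpi H) as (r&c&_&(Wa'&Sa'&_&_&Wt&_&_)).
    simpl in Wt, WW. repeat split; simpl; try tauto. left. split; auto. exists j, u. right; auto.
  - split; [auto|split; auto]. apply PiOK_upd; auto.
    destruct H0 as [Ha Sa]. destruct H1 as [Hc Sc]. wfInT Ha. wfInT Hc.
    destruct (ent_of _ _ _ Hpi H3) as (r&c'&_&(_&_&_&_&Wt&_&_)).
    simpl in Wt. repeat split; simpl; try tauto; try congruence.
    right. intros N rho HN Heq. apply (feq_iff N _ _ SArr) in Heq; auto.
  - split; [auto|split; auto]. apply PiOK_upd; auto.
    destruct H0 as [Ha Sa]. destruct H1 as [Hc Sc]. wfInT Ha. wfInT Hc.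
    destruct (ent_of _ _ _ Hpi H3) as (r&c'&_&(_&_&_&_&Wt&_&_)).
    simpl in Wt. repeat split; simpl; try tauto; try congruence.
    right. intros N rho HN Heq. apply (feq_iff N _ _ SArr) in Heq; auto.
  -
    destruct (ent_of _ _ _ Hpi H) as (r1&c1&_&(_&_&_&_&Wt1&_&_)).
    destruct (ent_of _ _ _ Hpi H0) as (r2&c2&_&(_&_&_&_&Wt2&_&_)).
    simpl in Wt1, Wt2. destruct Wt1 as (Wv&Sv). destruct Wt2 as (Ww&Sw).
    destruct (Reason_carr pi Hpi a _ S1 H2 v eq_refl R1 H5) as (WR1&HS1&HR1).
    destruct (Reason_carr pi Hpi a _ S2 H3 w eq_refl R2 H6) as (WR2&HS2&HR2).
    assert (HS : forall k, In k (S1 ++ S2) -> wfT k /\ sort_of k = SIdx).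
    { intros k Hk. apply in_app_or in Hk. destruct Hk; auto. }
    refine (conflict_ok _ _ _ Hw HM _ _ H7).
    + simpl. repeat split; auto. apply exdiff_wf; auto. rewrite Sv, Sw; auto.
    + intros N rho HN. simpl. intros [[H1' H2'] H3'].
      destruct (exdiff_sem N rho _ H3') as [d Hd].
      apply (feq_iff N _ _ SElem); auto.
      rewrite <- (HR1 N rho HN H1' d), <- (HR2 N rho HN H2' d); auto;
      intros k Hk; apply Hd; apply in_or_app; auto.
Qed.

Lemma derives_inv : forall c1 c2, derives c1 c2 -> Inv c1 -> Inv c2.
Proof. induction 1; auto. intros; apply IHderives. eapply step_inv; eauto. Qed.

Theorem mainTheorem1 (A : list formula) :
  (forall f, In f A -> wfF f /\ flatF f) ->
  derives (Cfg A None pi0) Unsat ->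
  ~ ArrSat A.
Proof.
  intros Hwf Hd [N [HN HmN]].
  apply (derives_inv _ _ Hd). split; [|split].
  - intros f Hf. apply Hwf; auto.
  - exists N; auto.
  - apply PiOK_pi0.
Qed.
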